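(* The class of axis-aligned rectangles over $\mathbb{R}^d$ has a lossless compression scheme of size at most $2d$ with respect to the query set consisting of the labeling oracle and the odd-one-out oracle $\mathcal{O}_{\text{odd}}$ (with the trivial inference rule).
   Context: Axis-aligned rectangles: indicator functions $h$ of $[a_1,b_1]\times\cdots\times[a_d,b_d]$ with $a_i\le b_i$, where $a_i=-\infty$ or $b_i=\infty$ is allowed (with the corresponding end open). The odd-one-out oracle on $h$ and $x\in\mathbb{R}^d$ returns $\{*\}$ if $h(x)=1$, and otherwise the set of pairs $(i,1)$ with $x_i>b_i$ and $(i,0)$ with $x_i<a_i$; an adversary returns one element of this set. For $S\subseteq\mathbb{R}^d$, $Q_h(S)$ is the set of all combinations of valid responses to all queries on points of $S$, and $q(S)|_W$ the restriction to $W\subseteq S$. A point $x$'s label is inferred by $q(S)$ if all rectangles consistent with $q(S)$ give $x$ the same label; $I(q(S))$ is the set of such points. A lossless compression scheme of size $k$: for every $h$, every $S$ on which $h$ is constant, and every $q(S)\in Q_h(S)$, there is $W\subseteq S$, $|W|\le k$, with $I(q(S))=I(q(S)|_W)$. *)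

(* Defs.v *)
From HB Require Import structures.
From mathcomp Require Import all_boot all_order all_algebra.
From mathcomp Require Import reals.

Set Implicit Arguments.
Unset Strict Implicit.
Unset Printing Implicit Defensive.

Import Order.TTheory GRing.Theory Num.Theory.
Local Open Scope ring_scope.

Section Rectangles.
Variables (R : realType) (d : nat).

(* A rectangle [a_1,b_1] x ... x [a_d,b_d] is given by lower ends lo and upper
   ends hi; [None] stands for an infinite end (-oo for lo, +oo for hi), the
   corresponding side being open. *)
Definition ends := 'I_d -> option R.

Definition wf_rect (lo hi : ends) : Prop :=
  forall i a b, lo i = Some a -> hi i = Some b -> a <= b.

Definition in_rect (lo hi : ends) (x : 'rV[R]_d) : bool :=
  [forall i, (if lo i is Some a then a <= x ord0 i else true)
          && (if hi i is Some b then x ord0 i <= b else true)].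

(* Response of the odd-one-out oracle: [None] is the symbol *, and
   [Some (i, true)] / [Some (i, false)] are the pairs (i,1) / (i,0). *)
Definition odd_resp := option ('I_d * bool).

Definition resp := (bool * odd_resp)%type.

Definition valid_odd (lo hi : ends) (x : 'rV[R]_d) (o : odd_resp) : Prop :=
  match o with
  | None => in_rect lo hi x
  | Some (i, true) =>
      ~~ in_rect lo hi x /\ exists b, hi i = Some b /\ b < x ord0 i
  | Some (i, false) =>
      ~~ in_rect lo hi x /\ exists a, lo i = Some a /\ x ord0 i < a
  end.

Definition valid_resp (lo hi : ends) (x : 'rV[R]_d) (r : resp) : Prop :=
  r.1 = in_rect lo hi x /\ valid_odd lo hi x r.2.

(* q (restricted to the points of S) is in Q_h(S); an answer function q
   records one valid response per queried point. *)
Definition in_Q (lo hi : ends) (S : seq 'rV[R]_d) (q : 'rV[R]_d -> resp) : Prop :=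
  forall x, x \in S -> valid_resp lo hi x (q x).

Definition consistent (W : seq 'rV[R]_d) (q : 'rV[R]_d -> resp) (lo hi : ends) : Prop :=
  wf_rect lo hi /\ in_Q lo hi W q.

Definition inferred (W : seq 'rV[R]_d) (q : 'rV[R]_d -> resp) (x : 'rV[R]_d) : Prop :=
  forall lo1 hi1 lo2 hi2, consistent W q lo1 hi1 -> consistent W q lo2 hi2 ->
    in_rect lo1 hi1 x = in_rect lo2 hi2 x.

Definition lossless_compression (k : nat) : Prop :=
  forall (lo hi : ends), wf_rect lo hi ->
  forall S : seq 'rV[R]_d,
    (forall x y, x \in S -> y \in S -> in_rect lo hi x = in_rect lo hi y) ->
  forall q : 'rV[R]_d -> resp, in_Q lo hi S q ->
  exists W : seq 'rV[R]_d,
    [/\ {subset W <= S}, (size W <= k)%N &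
        forall x : 'rV[R]_d, inferred S q x <-> inferred W q x].

End Rectangles.

(* Main.v *)
Require Import Defs.
From mathcomp Require Import all_boot all_order all_algebra.
From mathcomp Require Import reals.

Set Implicit Arguments.
Unset Strict Implicit.
Unset Printing Implicit Defensive.
Import Order.TTheory GRing.Theory Num.Theory.
Local Open Scope ring_scope.

Fixpoint pmin (R : realType) (T : Type) (f : T -> R) (l : seq T) : seq T :=
  match l with
  | [::] => [::]
  | x :: l' => match pmin f l' with
               | [::] => [:: x]
               | y :: _ => if f x <= f y then [:: x] else [:: y]
               end
  end.

Lemma pminP (R : realType) (T : eqType) (f : T -> R) (l : seq T) :
  (l = [::] /\ pmin f l = [::]) \/
  exists m, [/\ pmin f l = [:: m], m \in l & forall s, s \in l -> f m <= f s].
Proof.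
elim: l => [|x l IH] /=; first by left.
right; case: IH => [[-> ->]|[m [-> ml mmin]]].
  exists x; split; rewrite ?mem_seq1 //.
  by move=> s; rewrite mem_seq1 => /eqP ->.
case: ifP => fxm.
  exists x; split; rewrite ?inE ?eqxx //.
  move=> s; rewrite inE => /orP [/eqP -> // | sl].
  exact: le_trans fxm (mmin _ sl).
exists m; split; rewrite ?inE ?ml ?orbT //.
move=> s; rewrite inE => /orP [/eqP -> | sl]; last exact: mmin.
by apply: ltW; rewrite ltNge fxm.
Qed.

Lemma pmin_size (R : realType) (T : eqType) (f : T -> R) (l : seq T) :
  (size (pmin f l) <= 1)%N.
Proof. by case: (pminP f l) => [[_ ->]|[m [-> _ _]]]. Qed.

Lemma pmin_sub (R : realType) (T : eqType) (f : T -> R) (l : seq T) x :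
  x \in pmin f l -> x \in l.
Proof.
by case: (pminP f l) => [[_ ->]|[m [-> ml _]]]; rewrite // mem_seq1 => /eqP ->.
Qed.

Lemma size_flat2 (I T : Type) (f : I -> seq T) (l : seq I) :
  (forall i, size (f i) <= 2)%N -> (size (flatten (map f l)) <= 2 * size l)%N.
Proof.
move=> H; elim: l => [|i l IH] //=.
rewrite size_cat mulnS; exact: leq_add.
Qed.


Lemma cons_sub (R : realType) (d : nat) (W S : seq 'rV[R]_d) q lo hi :
  {subset W <= S} -> consistent S q lo hi -> consistent W q lo hi.
Proof. by move=> sub [wf hq]; split => // x /sub /hq. Qed.

Lemma not_in_rect (R : realType) (d : nat) (lo hi : ends R d) x :
  ~~ in_rect lo hi x ->
  exists i, (exists a, lo i = Some a /\ x ord0 i < a) \/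
            (exists b, hi i = Some b /\ b < x ord0 i).
Proof.
move/forallPn => [i]; rewrite negb_and => H; exists i.
move: H; case: (lo i) => [a|]; case: (hi i) => [b|] //=; rewrite -?ltNge.
- by case/orP => H; [left; exists a | right; exists b].
- by rewrite orbF => H; left; exists a.
- by move=> H; right; exists b.
Qed.

Lemma in_rect_coord (R : realType) (d : nat) (lo hi : ends R d) x i :
  in_rect lo hi x ->
  (forall a, lo i = Some a -> a <= x ord0 i) /\
  (forall b, hi i = Some b -> x ord0 i <= b).
Proof.
move/forallP/(_ i); case: (lo i) => [a'|]; case: (hi i) => [b'|] //=.
- by case/andP => H1 H2; split => ? [<-].
- by rewrite andbT => H; split => ? // [<-].
- by move=> H; split => ? // [<-].
Qed.

Definition Pmx (R : realType) (d : nat) (q : 'rV[R]_d -> resp d) (i : 'I_d)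
  (s : 'rV[R]_d) : bool := ((q s).2 == None) || ((q s).2 == Some (i, false)).
Definition Pmn (R : realType) (d : nat) (q : 'rV[R]_d -> resp d) (i : 'I_d)
  (s : 'rV[R]_d) : bool := ((q s).2 == None) || ((q s).2 == Some (i, true)).
Definition mxl (R : realType) (d : nat) (q : 'rV[R]_d -> resp d) (S : seq 'rV[R]_d)
  (i : 'I_d) := pmin (fun s : 'rV[R]_d => - s ord0 i) (filter (Pmx q i) S).
Definition mnl (R : realType) (d : nat) (q : 'rV[R]_d -> resp d) (S : seq 'rV[R]_d)
  (i : 'I_d) := pmin (fun s : 'rV[R]_d => s ord0 i) (filter (Pmn q i) S).
Definition Wof (R : realType) (d : nat) (q : 'rV[R]_d -> resp d) (S : seq 'rV[R]_d) :=
  flatten [seq mxl q S i ++ mnl q S i | i <- enum 'I_d].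

Lemma W_sub (R : realType) (d : nat) (q : 'rV[R]_d -> resp d) (S : seq 'rV[R]_d) :
  {subset Wof q S <= S}.
Proof.
move=> w /flatten_mapP [i _]; rewrite mem_cat => /orP [] /pmin_sub;
  by rewrite mem_filter => /andP [].
Qed.

Lemma W_size (R : realType) (d : nat) (q : 'rV[R]_d -> resp d) (S : seq 'rV[R]_d) :
  (size (Wof q S) <= 2 * d)%N.
Proof.
have -> : (2 * d = 2 * size (enum 'I_d))%N by rewrite size_enum_ord.
apply: size_flat2 => i.
by rewrite size_cat (leq_add (pmin_size _ _) (pmin_size _ _)).
Qed.

Lemma mx_inW (R : realType) (d : nat) (q : 'rV[R]_d -> resp d) (S : seq 'rV[R]_d) i m :
  m \in mxl q S i -> m \in Wof q S.
Proof. by move=> H; apply/flatten_mapP; exists i; rewrite ?mem_enum // mem_cat H. Qed.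

Lemma mn_inW (R : realType) (d : nat) (q : 'rV[R]_d -> resp d) (S : seq 'rV[R]_d) i m :
  m \in mnl q S i -> m \in Wof q S.
Proof. by move=> H; apply/flatten_mapP; exists i; rewrite ?mem_enum // mem_cat H orbT. Qed.

Lemma infer_pos (R : realType) (d : nat) (V : seq 'rV[R]_d) q :
  (forall y, y \in V -> q y = (true, None)) ->
  forall x, inferred V q x <-> (forall lo hi, consistent V q lo hi -> in_rect lo hi x).
Proof.
move=> H x.
have inF : forall y, in_rect (fun _ : 'I_d => @None R) (fun _ : 'I_d => @None R) y.
  by move=> y; apply/forallP.
have full : consistent V q (fun _ : 'I_d => @None R) (fun _ : 'I_d => @None R).
  split => // y /H ->; split => //=; by rewrite inF.
split.
  by move=> Hi lo hi c; rewrite (Hi _ _ _ _ c full) inF.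
by move=> Hc lo1 hi1 lo2 hi2 c1 c2; rewrite !Hc.
Qed.

Lemma pos_case (R : realType) (d : nat) (S : seq 'rV[R]_d) q s0 :
  s0 \in S -> (forall s, s \in S -> q s = (true, None)) ->
  forall x, inferred S q x <-> inferred (Wof q S) q x.
Proof.
move=> s0S Hpos x.
have HW : forall y, y \in Wof q S -> q y = (true, None) by move=> y /W_sub /Hpos.
rewrite (infer_pos Hpos) (infer_pos HW); split; last first.
  by move=> H lo hi c; apply: H; exact: cons_sub (@W_sub _ _ q S) c.
move=> H lo hi c; apply/negPn/negP => /not_in_rect [i [[a [Hlo Hxa]]|[b [Hhi Hbx]]]].
- have inF : forall s, s \in S -> s \in filter (Pmn q i) S.
    by move=> s sS; rewrite mem_filter sS /Pmn Hpos.
  case: (pminP (fun s : 'rV[R]_d => s ord0 i) (filter (Pmn q i) S)) =>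
     [[E _]|[m [Em mF mmin]]].
    by have := inF _ s0S; rewrite E.
  have mW : m \in Wof q S by apply: (@mn_inW _ _ _ _ i); rewrite /mnl Em mem_seq1.
  have := c.2 m mW; rewrite HW // => -[_ /= inm].
  have am := (in_rect_coord i inm).1 a Hlo.
  pose lo' := fun j : 'I_d => if j == i then Some (m ord0 i) else None.
  pose hi' := fun j : 'I_d => @None R.
  have iny : forall y, y \in S -> in_rect lo' hi' y.
    move=> y yS; apply/forallP => j /=; rewrite andbT /lo'.
    by case: eqP => [->|_] //; exact: mmin (inF _ yS).
  have cS : consistent S q lo' hi'.
    split; first by move=> j a' b' _.
    by move=> y yS; rewrite Hpos //; split => //=; rewrite iny.
  have := (in_rect_coord i (H lo' hi' cS)).1 (m ord0 i); rewrite /lo' eqxx => /(_ erefl) mx.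
  by have := lt_le_trans Hxa (le_trans am mx); rewrite ltxx.
- have inF : forall s, s \in S -> s \in filter (Pmx q i) S.
    by move=> s sS; rewrite mem_filter sS /Pmx Hpos.
  case: (pminP (fun s : 'rV[R]_d => - s ord0 i) (filter (Pmx q i) S)) =>
     [[E _]|[m [Em mF mmin]]].
    by have := inF _ s0S; rewrite E.
  have mW : m \in Wof q S by apply: (@mx_inW _ _ _ _ i); rewrite /mxl Em mem_seq1.
  have := c.2 m mW; rewrite HW // => -[_ /= inm].
  have mb := (in_rect_coord i inm).2 b Hhi.
  pose hi' := fun j : 'I_d => if j == i then Some (m ord0 i) else None.
  pose lo' := fun j : 'I_d => @None R.
  have iny : forall y, y \in S -> in_rect lo' hi' y.
    move=> y yS; apply/forallP => j /=; rewrite /hi'.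
    case: eqP => [->|_] //=; have := mmin _ (inF _ yS); by rewrite lerN2.
  have cS : consistent S q lo' hi'.
    split; first by move=> j a' b'.
    by move=> y yS; rewrite Hpos //; split => //=; rewrite iny.
  have := (in_rect_coord i (H lo' hi' cS)).2 (m ord0 i); rewrite /hi' eqxx => /(_ erefl) xm.
  by have := lt_le_trans Hbx (le_trans xm mb); rewrite ltxx.
Qed.

Lemma neg_case (R : realType) (d : nat) (S : seq 'rV[R]_d) q :
  (forall s, s \in S -> (q s).1 = false /\ (q s).2 != None) ->
  forall lo hi, consistent (Wof q S) q lo hi -> consistent S q lo hi.
Proof.
move=> Hneg lo hi [wf c]; split => // s sS.
have [e1 e2] := Hneg s sS.
case E: (q s) e1 e2 => [l o] /= e1 e2; subst l.
case: o E e2 => [[i []]|] E //= _.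
- have sF : s \in filter (Pmn q i) S by rewrite mem_filter sS /Pmn E eqxx orbT.
  case: (pminP (fun s : 'rV[R]_d => s ord0 i) (filter (Pmn q i) S)) =>
     [[E' _]|[m [Em mF mmin]]]; first by rewrite E' in sF.
  have mW : m \in Wof q S by apply: (@mn_inW _ _ _ _ i); rewrite /mnl Em mem_seq1.
  have [_ hm] := c m mW.
  move: mF; rewrite mem_filter => /andP [Pm mS].
  have [_ nm] := Hneg m mS.
  have Qm : (q m).2 = Some (i, true).
    move: Pm nm; rewrite /Pmn; case: (q m).2 => [o|] //.
    by rewrite orFb => /eqP ->.
  rewrite Qm in hm; case: hm => [_ [b [Hb bm]]].
  have ms : m ord0 i <= s ord0 i := mmin _ sF.
  have nin : ~~ in_rect lo hi s.
    apply/negP => /(in_rect_coord i) [_ /(_ b Hb)] sb.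
    by have := lt_le_trans bm (le_trans ms sb); rewrite ltxx.
  split; first by rewrite (negbTE nin).
  split => //; exists b; split => //; exact: lt_le_trans bm ms.
- have sF : s \in filter (Pmx q i) S by rewrite mem_filter sS /Pmx E eqxx orbT.
  case: (pminP (fun s : 'rV[R]_d => - s ord0 i) (filter (Pmx q i) S)) =>
     [[E' _]|[m [Em mF mmin]]]; first by rewrite E' in sF.
  have mW : m \in Wof q S by apply: (@mx_inW _ _ _ _ i); rewrite /mxl Em mem_seq1.
  have [_ hm] := c m mW.
  move: mF; rewrite mem_filter => /andP [Pm mS].
  have [_ nm] := Hneg m mS.
  have Qm : (q m).2 = Some (i, false).
    move: Pm nm; rewrite /Pmx; case: (q m).2 => [o|] //.
    by rewrite orFb => /eqP ->.
  rewrite Qm in hm; case: hm => [_ [a [Ha ma]]].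
  have sm : s ord0 i <= m ord0 i by have := mmin _ sF; rewrite lerN2.
  have nin : ~~ in_rect lo hi s.
    apply/negP => /(in_rect_coord i) [/(_ a Ha) asm _].
    by have := lt_le_trans ma (le_trans asm sm); rewrite ltxx.
  split; first by rewrite (negbTE nin).
  split => //; exists a; split => //; exact: le_lt_trans sm ma.
Qed.

Theorem proposition4p1 (R : realType) (d : nat) :
  lossless_compression R d (2 * d).
Proof.
move=> lo hi wf S hc q hq.
exists (Wof q S); split; [exact: W_sub | exact: W_size |].
case: (boolP (has (in_rect lo hi) S)) => [/hasP [s0 s0S ins0] | /hasPn Hn].
- apply: (pos_case s0S) => s sS.
  have [h1 h2] := hq s sS.
  have ins : in_rect lo hi s by rewrite (hc s s0).
  move: h1 h2; case: (q s) => l o /= ->; rewrite ins.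
  case: o => [[i b]|] // H; exfalso; case: b H => /= [[]|[]]; by rewrite ins.
- have Hneg : forall s, s \in S -> (q s).1 = false /\ (q s).2 != None.
    move=> s sS; have [h1 h2] := hq s sS; have nins := Hn s sS.
    split; first by rewrite h1 (negbTE nins).
    by move: h2; case: (q s).2 => // /= ins; rewrite ins in nins.
  move=> x; split => H lo1 hi1 lo2 hi2 c1 c2.
  + by apply: H; apply: neg_case.
  + by apply: H; apply: cons_sub (@W_sub _ _ q S) _.
Qed.
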